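(* Let $D\ge 1$ and let $\mathscr{G}_1,\mathscr{G}_2: L^2([0,1]^D)\to L^2([0,1]^D)$ be trace-class covariance operators of finite ranks $K_1,K_2<\infty$, respectively, whose eigenfunctions are real analytic on $[0,1]^D$. Let $\mathscr{B}_1,\mathscr{B}_2: L^2([0,1]^D)\to L^2([0,1]^D)$ be trace-class covariance operators that are banded with bandwidths $\underline{\delta}_1=(\delta_{1,1},\dots,\delta_{1,D})$ and $\underline{\delta}_2=(\delta_{2,1},\dots,\delta_{2,D})$, respectively, where every component $\delta_{i,d}$ satisfies $0<\delta_{i,d}<1$. Then $$\mathscr{G}_1+\mathscr{B}_1=\mathscr{G}_2+\mathscr{B}_2 \iff \mathscr{G}_1=\mathscr{G}_2\ \text{ and }\ \mathscr{B}_1=\mathscr{B}_2 .$$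
   Context: A covariance operator $\mathscr{B}$ on $L^2([0,1]^D)$ with kernel $b$ is called $\underline{\delta}$-banded, $\underline{\delta}=(\delta_1,\dots,\delta_D)$ with $\delta_d>0$, if $b(\underline{s}_1,\underline{s}_2)=0$ whenever $|s_{1,d}-s_{2,d}|\ge\delta_d$ for some $d\in\{1,\dots,D\}$ (equivalently $b(\underline{s}_1,\underline{s}_2)=\mathbb{1}\{|s_{1,d}-s_{2,d}|<\delta_d\ \forall d\}\,b(\underline{s}_1,\underline{s}_2)$). A function on $[0,1]^D$ is called real analytic on $[0,1]^D$ if it is the restriction of a real analytic function defined on some open set $U\subset\mathbb{R}^D$ containing $[0,1]^D$. By Mercer's theorem a finite-rank covariance $\mathscr{G}$ has kernel $g(\underline{s}_1,\underline{s}_2)=\sum_{k=1}^K\lambda_k\eta_k(\underline{s}_1)\eta_k(\underline{s}_2)$ with $\lambda_k>0$ and orthonormal eigenfunctions $\eta_k$. *)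

(* Defs.v *)
From HB Require Import structures.
From mathcomp Require Import all_boot all_order all_algebra.
From mathcomp Require Import all_classical all_reals all_analysis.
Set Implicit Arguments. Unset Strict Implicit. Unset Printing Implicit Defensive.
Import Order.TTheory GRing.Theory Num.Theory.
Import numFieldNormedType.Exports.
Local Open Scope classical_set_scope.
Local Open Scope ring_scope.

(* Points of R^n are n-tuples (with the product Borel sigma-algebra of
   mathcomp-analysis).  Coordinate d of s is  tnth s d. *)

Definition cube (R : realType) (n : nat) (s : n.-tuple R) : Prop :=
  forall d : 'I_n, 0 <= tnth s d <= 1.

(* Lebesgue integral over [0,1]^n of a nonnegative measurable (extended-real)
   function, written as the iterated one-dimensional Lebesgue integral
   (equal to the integral w.r.t. n-dimensional Lebesgue measure by Tonelli). *)
Fixpoint cube_nnint (R : realType) (n : nat) : (n.-tuple R -> \bar R) -> \bar R :=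
  match n return (n.-tuple R -> \bar R) -> \bar R with
  | 0 => fun f => f [tuple]
  | n'.+1 => fun f =>
      (\int[@lebesgue_measure R]_(x in `[0%R, 1%R]%classic)
         cube_nnint (fun t : n'.-tuple R => f (cons_tuple x t)))%E
  end.

Definition cube_int (R : realType) (n : nat) (f : n.-tuple R -> R) : R :=
  fine (cube_nnint (fun t => (Num.max (f t) 0)%:E))
  - fine (cube_nnint (fun t => (Num.max (- f t) 0)%:E)).

Definition L2 (R : realType) (n : nat) (f : n.-tuple R -> R) : Prop :=
  measurable_fun setT f /\ (cube_nnint (fun t => (f t ^+ 2)%:E) < +oo)%E.

Definition ip (R : realType) (n : nat) (f g : n.-tuple R -> R) : R :=
  cube_int (fun t => f t * g t).

Definition kern (R : realType) (D : nat) := D.-tuple R -> D.-tuple R -> R.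

Definition kint (R : realType) (D : nat) (k : D.-tuple R -> D.-tuple R -> \bar R)
  : \bar R := cube_nnint (fun s => cube_nnint (fun t => k s t)).

(* Two integral (Hilbert-Schmidt) operators with kernels k1, k2 are equal
   iff their kernels agree almost everywhere on [0,1]^D x [0,1]^D. *)
Definition op_eq (R : realType) (D : nat) (k1 k2 : kern R D) : Prop :=
  kint (fun s t => (`|k1 s t - k2 s t|)%:E) = 0%E.

Definition quad (R : realType) (D : nat) (k : kern R D) (f : D.-tuple R -> R) : R :=
  cube_int (fun s => cube_int (fun t => k s t * f s * f t)).

(* k is the kernel of a covariance operator on L^2([0,1]^D):
   square-integrable (measurable) kernel, self-adjoint, positive semidefinite. *)
Definition covariance_kernel (R : realType) (D : nat) (k : kern R D) : Prop :=
  [/\ measurable_fun setT (fun p : D.-tuple R * D.-tuple R => k p.1 p.2),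
      (kint (fun s t => (k s t ^+ 2)%:E) < +oo)%E,
      op_eq k (fun s t => k t s)
    & forall f, L2 f -> 0 <= quad k f].

Definition onb (R : realType) (D : nat) (e : nat -> D.-tuple R -> R) : Prop :=
  [/\ forall m, L2 (e m),
      forall m n, ip (e m) (e n) = (m == n)%:R
    & forall f, L2 f -> (forall m, ip f (e m) = 0) ->
        cube_nnint (fun t => (f t ^+ 2)%:E) = 0%E].

(* trace class (for a positive operator): sum_m <K e_m, e_m> < oo for an ONB *)
Definition trace_class (R : realType) (D : nat) (k : kern R D) : Prop :=
  exists e, onb e /\ (\sum_(m <oo) (quad k (e m))%:E < +oo)%E.

Definition banded (R : realType) (D : nat) (delta : 'I_D -> R) (k : kern R D)
  : Prop :=
  forall s t, cube s -> cube t ->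
    (exists d : 'I_D, delta d <= `|tnth s d - tnth t d|) -> k s t = 0.

Definition open_set (R : realType) (n : nat) (U : set (n.-tuple R)) : Prop :=
  forall x, U x -> exists2 e : R, 0 < e &
    forall y, (forall d, `|tnth y d - tnth x d| < e) -> U y.

(* partial sums over the boxes {alpha | alpha_d < N} of the multivariate
   power series  sum_alpha c_alpha (x - x0)^alpha  and of its absolute series *)
Definition ps_partial (R : realType) (n : nat) (c : ('I_n -> nat) -> R)
  (x0 x : n.-tuple R) (N : nat) : R :=
  \sum_(a : {ffun 'I_n -> 'I_N})
     c (fun d => nat_of_ord (a d)) * \prod_(d < n) (tnth x d - tnth x0 d) ^+ a d.

Definition ps_abs_partial (R : realType) (n : nat) (c : ('I_n -> nat) -> R)
  (x0 x : n.-tuple R) (N : nat) : R :=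
  \sum_(a : {ffun 'I_n -> 'I_N})
     `|c (fun d => nat_of_ord (a d))| *
       \prod_(d < n) `|tnth x d - tnth x0 d| ^+ a d.

Definition real_analytic_on (R : realType) (n : nat) (U : set (n.-tuple R))
  (f : n.-tuple R -> R) : Prop :=
  forall x0, U x0 -> exists2 r : R, 0 < r & exists c : ('I_n -> nat) -> R,
    forall x, (forall d, `|tnth x d - tnth x0 d| < r) -> U x ->
      (exists M : R, forall N, ps_abs_partial c x0 x N <= M) /\
      ((fun N => ps_partial c x0 x N) @ \oo --> f x).

Definition real_analytic_on_cube (R : realType) (n : nat) (eta : n.-tuple R -> R)
  : Prop :=
  exists U : set (n.-tuple R), exists f : n.-tuple R -> R,
    [/\ open_set U, (forall x, cube x -> U x), real_analytic_on U f
      & forall x, cube x -> f x = eta x].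

Definition mercer (R : realType) (D K : nat) (lam : 'I_K -> R)
  (eta : 'I_K -> D.-tuple R -> R) : kern R D :=
  fun s t => \sum_(k < K) lam k * eta k s * eta k t.

(* (lam, eta) is the eigen-decomposition of a covariance operator of rank K
   with real-analytic eigenfunctions *)
Definition analytic_finite_rank (R : realType) (D K : nat) (lam : 'I_K -> R)
  (eta : 'I_K -> D.-tuple R -> R) : Prop :=
  [/\ forall k, 0 < lam k,
      forall k, L2 (eta k),
      forall j k, ip (eta j) (eta k) = (j == k)%:R
    & forall k, real_analytic_on_cube (eta k)].

(* Main.v *)
Require Import Defs.
From HB Require Import structures.
From mathcomp Require Import all_boot all_order all_algebra.
From mathcomp Require Import all_classical all_reals all_analysis.
From mathcomp Require Import ring lra.
Import Order.TTheory GRing.Theory Num.Theory.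
Import numFieldNormedType.Exports.
Section Aux.
Local Open Scope classical_set_scope.
Local Open Scope ring_scope.
Context {R : realType}.

Lemma lim_bound (u : nat -> R) (l a B : R) (N0 : nat) :
  u @ \oo --> l -> (forall n, (N0 <= n)%N -> `|u n - a| <= B) -> `|l - a| <= B.
Proof.
move=> ul hb; apply/ler_addgt0Pr => e e0.
move: (ul) => /cvgr_dist_lt/(_ e e0) H.
near \oo => n.
have h1 : `|l - u n| < e by near: n.
have h2 : (N0 <= n)%N by near: n; exact: nbhs_infty_ge.
apply: le_trans (ler_distD (u n) l a) _.
rewrite addrC; apply: lerD; [exact: hb| exact: ltW].
Unshelve. all: by end_near.
Qed.
Arguments lim_bound [u l a B N0].


Lemma small_pos (a M : R) : 0 <= M -> (forall q, 0 < q <= 1 -> a <= q * M) -> a <= 0.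
Proof.
move=> M0 H; rewrite leNgt; apply/negP => a0.
have den : 0 < a + M + 1 by lra.
set q := a / (a + M + 1).
have q0 : 0 < q by rewrite /q divr_gt0.
have q1 : q <= 1 by rewrite /q ler_pdivrMr // mul1r; lra.
have := H q; rewrite q0 q1 => /(_ isT).
rewrite /q mulrAC ler_pdivlMr // => h.
nra.
Qed.
Arguments small_pos [a M].

Definition an1 (g : R -> R) (T : R) : Prop :=
  exists2 r : R, 0 < r & exists c : nat -> R, forall x, `|x - T| < r -> 0 <= x <= 1 ->
    (exists M, forall N, \sum_(j < N) `|c j| * `|x - T| ^+ j <= M) /\
    ((fun N => \sum_(j < N) c j * (x - T) ^+ j) @ \oo --> g x).

Lemma coef0 (g : R -> R) (T r e : R) (c : nat -> R) : 0 < r -> 0 < e -> e <= T -> T <= 1 ->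
  (forall x, `|x - T| < r -> 0 <= x <= 1 ->
    (exists M, forall N, \sum_(j < N) `|c j| * `|x - T| ^+ j <= M) /\
    ((fun N => \sum_(j < N) c j * (x - T) ^+ j) @ \oo --> g x)) ->
  (forall x, T - e < x < T -> g x = 0) -> forall m, c m = 0.
Proof.
move=> r0 e0 eT T1 Hs Hz.
set rho := Num.min r e / 2.
have mre : 0 < Num.min r e by rewrite lt_min r0 e0.
have rho0 : 0 < rho by rewrite /rho divr_gt0.
have mr : Num.min r e <= r by rewrite ge_min lexx.
have me : Num.min r e <= e by rewrite ge_min lexx orbT.
have rhor : rho < r.
  by apply: lt_le_trans mr; rewrite /rho ltr_pdivrMr //; lra.
have rhoe : rho < e.
  by apply: lt_le_trans me; rewrite /rho ltr_pdivrMr //; lra.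
have [M HM] : exists M, forall N, \sum_(j<N) `|c j| * rho ^+ j <= M.
  have E : `|T - rho - T| = rho by rewrite addrAC subrr add0r normrN gtr0_norm.
  have h1 : `|T - rho - T| < r by rewrite E.
  have h2 : 0 <= T - rho <= 1 by apply/andP; split; lra.
  have [[M HM] _] := Hs (T - rho) h1 h2.
  by exists M => N; have := HM N; rewrite E.
have M0 : 0 <= M by have := HM 0%N; rewrite big_ord0.
elim/ltn_ind => m IH.
apply/eqP; rewrite -normr_le0.
suff : `|c m| * rho ^+ m <= 0 by rewrite pmulr_lle0 // exprn_gt0.
apply: (@small_pos _ M M0) => q /andP[q0 q1].
set x := T - q * rho.
have qr0 : 0 < q * rho by rewrite mulr_gt0.
have qrr : q * rho <= rho by rewrite ler_piMl // ltW.
have hx : `|x - T| = q * rho by rewrite /x addrAC subrr add0r normrN gtr0_norm.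
have h1 : `|x - T| < r by rewrite hx; exact: le_lt_trans qrr rhor.
have h2 : 0 <= x <= 1 by apply/andP; split; rewrite /x; lra.
have [_ cv] := Hs x h1 h2.
have gx : g x = 0 by apply: Hz; apply/andP; split; rewrite /x; lra.
have B : forall N, (m.+1 <= N)%N ->
    `|\sum_(j<N) c j * (x-T)^+j - c m * (x - T)^+m| <= q^+m.+1 * M.
  move=> N mN.
  rewrite (bigD1 (Ordinal mN)) //= addrAC subrr add0r.
  apply: le_trans (ler_norm_sum _ _ _) _.
  apply: (@le_trans _ _ (\sum_(j<N | j != Ordinal mN) q^+m.+1 * (`|c j| * rho^+j))).
    apply: ler_sum => j jm; rewrite normrM normrX hx.
    case: (ltngtP j m) => [jm'|jm'|jeq].
    - by rewrite IH // normr0 !mul0r mulr0.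
    - rewrite exprMn mulrCA mulrA [X in _ <= X]mulrCA [X in _ <= X]mulrA.
      apply: (ler_wpM2r (exprn_ge0 _ (ltW rho0))).
      rewrite mulrC; apply: (ler_wpM2l (normr_ge0 _)).
      by apply: ler_wiXn2l => //; exact: ltW.
    - by exfalso; move: jm; rewrite (_ : j = Ordinal mN) ?eqxx //; apply: val_inj.
  rewrite -mulr_sumr; apply: ler_wpM2l; first by rewrite exprn_ge0 // ltW.
  apply: le_trans (HM N).
  rewrite [X in _ <= X](bigD1 (Ordinal mN)) //=.
  by rewrite lerDr mulr_ge0 // exprn_ge0 // ltW.
have := lim_bound cv B.
rewrite gx sub0r normrN normrM normrX hx exprMn exprS => h.
have qm0 : 0 < q ^+ m by rewrite exprn_gt0.
rewrite -(ler_pM2l qm0) mulrA [q ^+ m * _]mulrC -mulrA.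
by apply: (le_trans h); rewrite mulrA [q ^+ m * q]mulrC.
Qed.
Arguments coef0 [g T r e c].


Lemma an1_left (g : R -> R) (T e : R) : an1 g T -> 0 < e -> e <= T -> T <= 1 ->
  (forall x, T - e < x < T -> g x = 0) ->
  exists2 r, 0 < r & forall x, `|x - T| < r -> 0 <= x <= 1 -> g x = 0.
Proof.
case=> r r0 [c Hs] e0 eT T1 Hz; exists r => // x hx hx01.
have [_ cv] := Hs x hx hx01.
have c0 := coef0 r0 e0 eT T1 Hs Hz.
have := lim_bound (N0 := 0%N) (a := 0) (B := 0) cv.
rewrite subr0 normr_le0 => /(_ _)/eqP; apply => n _.
by rewrite big1 ?subr0 ?normr0 // => j _; rewrite c0 mul0r.
Qed.
Arguments an1_left [g T e].

Lemma an1_refl (g : R -> R) (T : R) : an1 g (1 - T) -> an1 (fun x => g (1 - x)) T.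
Proof.
case=> r r0 [c Hs]; exists r => //; exists (fun j => c j * (-1) ^+ j) => x hx hx01.
have E : 1 - x - (1 - T) = (-1) * (x - T) by ring.
have hx' : `|1 - x - (1 - T)| < r by rewrite E mulN1r normrN.
have hx01' : 0 <= 1 - x <= 1 by move: hx01 => /andP[? ?]; apply/andP; split; lra.
have [[M HM] cv] := Hs (1 - x) hx' hx01'.
split.
  exists M => N; apply: le_trans (HM N); rewrite le_eqVlt; apply/orP; left; apply/eqP; apply: eq_bigr => j _.
  by rewrite E normrM normrM normrX normrN normr1 expr1n mulr1 mul1r.
suff -> : (fun N => \sum_(j < N) c j * (-1) ^+ j * (x - T) ^+ j) =
  (fun N => \sum_(j < N) c j * (1 - x - (1 - T)) ^+ j) by [].
by apply/funext => N; apply: eq_bigr => j _; rewrite E exprMn mulrA.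
Qed.
Arguments an1_refl [g T].

Lemma an1_RE (g : R -> R) (a b : R) : (forall T, 0 <= T <= 1 -> an1 g T) ->
  0 <= a -> a < b -> b <= 1 -> (forall x, a < x < b -> g x = 0) ->
  forall x, a < x <= 1 -> g x = 0.
Proof.
move=> Han a0 ab b1 Hz.
set m := (a + b) / 2.
have am : a < m by rewrite /m ltr_pdivlMr //; lra.
have mb : m < b by rewrite /m ltr_pdivrMr //; lra.
set S := [set y | m <= y <= 1 /\ forall x, m <= x <= y -> g x = 0].
have Sm : S m.
  split; first by apply/andP; split; lra.
  move=> x /andP[h1 h2]; have -> : x = m by apply/eqP; rewrite eq_le h1 h2.
  by apply: Hz; apply/andP.
have S1 : ubound S 1 by move=> y [/andP[_ ?] _].
have hs : has_sup S by split; [exists m | exists 1].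
set T := sup S.
have mT : m <= T by exact: sup_upper_bound.
have T1 : T <= 1 by apply: ge_sup => //; exists m.
have Z : forall x, a < x < T -> g x = 0.
  move=> x /andP[ax xT]; case: (ltP x m) => xm.
    by apply: Hz; apply/andP; split => //; apply: lt_trans mb.
  have Tx : 0 < T - x by rewrite subr_gt0.
  have [y [/andP[my y1] Hy] yx] := sup_adherent Tx hs.
  apply: Hy; apply/andP; split => //.
  by move: yx; rewrite /T; lra.
have T0 : 0 <= T by lra.
have HT : 0 <= T <= 1 by apply/andP.
have e0 : 0 < T - a by lra.
have eT : T - a <= T by lra.
have Z' : forall x, T - (T - a) < x < T -> g x = 0.
  by move=> x; rewrite opprB addrC subrK; exact: Z.
have [r r0 Hr] := an1_left (Han T HT) e0 eT T1 Z'.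
have TE : T = 1.
  apply/eqP; rewrite eq_le T1 /= leNgt; apply/negP => T1lt.
  set y := Num.min 1 (T + r / 2).
  have yT : T < y by rewrite /y lt_min T1lt /= ltrDl divr_gt0.
  have y1 : y <= 1 by rewrite /y ge_min lexx.
  have yr : y <= T + r / 2 by rewrite /y ge_min lexx orbT.
  have Sy : S y.
    split; first by apply/andP; split => //; lra.
    move=> x /andP[mx xy]; case: (ltP x T) => xT.
      by apply: Z; apply/andP; split => //; lra.
    apply: Hr; last by apply/andP; split; lra.
    rewrite ger0_norm; last by lra.
    have : r / 2 < r by rewrite ltr_pdivrMr //; lra.
    lra.
  by have := sup_upper_bound hs Sy; rewrite -/T; lra.
move=> x /andP[ax x1]; case: (ltP x T) => xT.
  by apply: Z; apply/andP.
apply: Hr; last by apply/andP; split; lra.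
have -> : x = T by lra.
by rewrite subrr normr0.
Qed.
Arguments an1_RE [g a b].

Lemma an1_id (g : R -> R) (a b : R) : (forall T, 0 <= T <= 1 -> an1 g T) ->
  0 <= a -> a < b -> b <= 1 -> (forall x, a < x < b -> g x = 0) ->
  forall x, 0 <= x <= 1 -> g x = 0.
Proof.
move=> Han a0 ab b1 Hz x /andP[x0 x1].
case: (ltP a x) => ax.
  by apply: (an1_RE Han a0 ab b1 Hz); apply/andP.
pose g' := fun y => g (1 - y).
have Han' : forall T, 0 <= T <= 1 -> an1 g' T.
  move=> T /andP[T0 T1]; apply: an1_refl; apply: Han; apply/andP; split; lra.
have Hz' : forall y, 1 - b < y < 1 - a -> g' y = 0.
  move=> y /andP[h1 h2]; apply: Hz; apply/andP; split; lra.
have := @an1_RE g' (1 - b) (1 - a) Han' _ _ _ Hz' (1 - x).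
move=> H.
have E : g' (1 - x) = g x by rewrite /g'; congr g; ring.
by rewrite -E; apply: H; try lra; apply/andP; split; lra.
Qed.
Arguments an1_id [g a b].


Lemma an1_ext (g1 g2 : R -> R) T : (forall x, 0 <= x <= 1 -> g1 x = g2 x) ->
  an1 g1 T -> an1 g2 T.
Proof.
move=> E [r r0 [c Hs]]; exists r => //; exists c => x hx hx01.
by rewrite -E //; exact: Hs.
Qed.
Arguments an1_ext [g1 g2 T].

Lemma an1_zero T : an1 (fun _ => 0) T.
Proof.
exists 1 => //; exists (fun _ => 0) => x _ _; split.
  by exists 0 => N; rewrite big1 // => j _; rewrite normr0 mul0r.
suff -> : (fun N => \sum_(j < N) (fun=> 0 : R) j * (x - T) ^+ j) = (fun _ => 0)
  by exact: cvg_cst.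
by apply/funext => N; rewrite big1 // => j _; rewrite mul0r.
Qed.

Lemma an1_add (g1 g2 : R -> R) T : an1 g1 T -> an1 g2 T ->
  an1 (fun x => g1 x + g2 x) T.
Proof.
move=> [r1 r10 [c1 H1]] [r2 r20 [c2 H2]].
exists (Num.min r1 r2); first by rewrite lt_min r10 r20.
exists (fun j => c1 j + c2 j) => x hx hx01.
move: hx; rewrite lt_min => /andP[hx1 hx2].
have [[M1 HM1] cv1] := H1 x hx1 hx01.
have [[M2 HM2] cv2] := H2 x hx2 hx01.
split.
  exists (M1 + M2) => N; apply: le_trans (lerD (HM1 N) (HM2 N)).
  have -> : forall (u v : 'I_N -> R), \sum_(j < N) u j + \sum_(j < N) v j = \sum_(j < N) (u j + v j).
    by move=> u v; rewrite big_split.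
  apply: ler_sum => j _.
  by rewrite -mulrDl; apply: ler_wpM2r; [exact: exprn_ge0|exact: ler_normD].
suff -> : (fun N => \sum_(j < N) (c1 j + c2 j) * (x - T) ^+ j) =
  ((fun N => \sum_(j < N) c1 j * (x - T) ^+ j) + (fun N => \sum_(j < N) c2 j * (x - T) ^+ j))
  by exact: cvgD.
by apply/funext => N; under eq_bigr do rewrite mulrDl; rewrite big_split.
Qed.
Arguments an1_add [g1 g2 T].

Lemma an1_scale (k : R) (g : R -> R) T : an1 g T -> an1 (fun x => k * g x) T.
Proof.
move=> [r r0 [c H]]; exists r => //; exists (fun j => k * c j) => x hx hx01.
have [[M HM] cv] := H x hx hx01.
split.
  exists (`|k| * M) => N; apply: le_trans (ler_wpM2l (normr_ge0 k) (HM N)).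
  by rewrite mulr_sumr; apply: ler_sum => j _; rewrite normrM mulrA.
suff -> : (fun N => \sum_(j < N) (k * c j) * (x - T) ^+ j) =
  (fun N => k * \sum_(j < N) c j * (x - T) ^+ j) by exact: cvgMr.
by apply/funext => N /=; rewrite mulr_sumr; apply: eq_bigr => j _; rewrite mulrA.
Qed.
Arguments an1_scale [k g T].

Lemma an1_sum (K : nat) (F : 'I_K -> R -> R) T : (forall k, an1 (F k) T) ->
  an1 (fun x => \sum_(k < K) F k x) T.
Proof.
elim: K F => [|K IH] F HF.
  by apply: an1_ext (an1_zero T) => x _; rewrite big_ord0.
apply: an1_ext (an1_add (IH (fun k => F (widen_ord (leqnSn K) k)) _) (HF ord_max)).
  by move=> x _; rewrite big_ord_recr.
by move=> k; exact: HF.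
Qed.


Lemma reindex (n N : nat) (d : 'I_n) (F : ('I_n -> nat) -> R) (y : 'I_n -> R) :
  (forall i, i != d -> y i = 0) ->
  \sum_(a : {ffun 'I_n -> 'I_N}) F (fun i => nat_of_ord (a i)) * \prod_(i < n) y i ^+ a i
  = \sum_(j < N) F (fun i => if i == d then nat_of_ord j else 0%N) * y d ^+ j.
Proof.
move=> y0.
rewrite (partition_big (fun a : {ffun 'I_n -> 'I_N} => a d) xpredT) //=.
apply: eq_bigr => j _.
have N0 : (0 < N)%N by apply: leq_ltn_trans (leq0n j) (ltn_ord j).
pose aj : {ffun 'I_n -> 'I_N} := [ffun i => if i == d then j else Ordinal N0].
rewrite (bigD1 aj) /=; last by rewrite ffunE eqxx.
rewrite [X in _ + X]big1 ?addr0; last first.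
  move=> a /andP[/eqP ad aneq].
  have [i ai] : exists i, a i != aj i.
    apply/existsP; rewrite -negb_forall; apply: contra aneq => /forallP h.
    by apply/eqP/ffunP => i; exact/eqP.
  have id : i != d by apply: contra ai => /eqP ->; rewrite ad ffunE eqxx.
  rewrite (bigD1 i) //= y0 // expr0n.
  have : nat_of_ord (a i) != 0%N.
    by apply: contra ai; rewrite ffunE (negbTE id) => /eqP h; apply/eqP/val_inj.
  by move=> /negbTE ->; rewrite mul0r mulr0.
congr (_ * _).
  congr F; apply/funext => i; rewrite ffunE; by case: (i == d).
rewrite (bigD1 d) //= big1 ?mulr1; first by rewrite ffunE eqxx.
by move=> i id; rewrite ffunE (negbTE id) expr0.
Qed.

Context {D : nat}.

Definition upd (x : D.-tuple R) (d : 'I_D) (t : R) : D.-tuple R :=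
  [tuple if i == d then t else tnth x i | i < D].

Lemma tnth_upd x d t i : tnth (upd x d t) i = if i == d then t else tnth x i.
Proof. by rewrite tnth_mktuple. Qed.

Lemma cube_upd x d t : cube x -> 0 <= t <= 1 -> cube (upd x d t).
Proof. by move=> cx ht i; rewrite tnth_upd; case: (i == d). Qed.

Lemma slice_an (eta : D.-tuple R -> R) : real_analytic_on_cube eta ->
  forall x d, cube x -> forall T, 0 <= T <= 1 -> an1 (fun t => eta (upd x d t)) T.
Proof.
case=> U [f [oU cU aU Ef]] x d cx T hT.
have cxT : cube (upd x d T) by exact: cube_upd.
have [r r0 [c Hc]] := aU _ (cU _ cxT).
apply: (@an1_ext (fun t => f (upd x d t))).
  by move=> t ht; rewrite Ef //; exact: cube_upd.
exists r => //; exists (fun j => c (fun i => if i == d then j else 0%N)) => t ht ht01.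
have Ct : cube (upd x d t) by exact: cube_upd.
have close : forall i, `|tnth (upd x d t) i - tnth (upd x d T) i| < r.
  by move=> i; rewrite !tnth_upd; case: (i == d) => //; rewrite subrr normr0.
have [[M HM] cv] := Hc _ close (cU _ Ct).
have yd : forall i, i != d -> tnth (upd x d t) i - tnth (upd x d T) i = 0.
  by move=> i /negbTE id; rewrite !tnth_upd id subrr.
have ydd : tnth (upd x d t) d - tnth (upd x d T) d = t - T by rewrite !tnth_upd eqxx.
split.
  exists M => N; apply: le_trans (HM N).
  rewrite /ps_abs_partial (@reindex D N d (fun a => `|c a|)
     (fun i => `|tnth (upd x d t) i - tnth (upd x d T) i|)); last first.
    by move=> i id; rewrite yd // normr0.
  by rewrite ydd.
suff <- : (fun N => ps_partial c (upd x d T) (upd x d t) N) =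
  (fun N => \sum_(j < N) c (fun i => if i == d then nat_of_ord j else 0%N) * (t - T) ^+ j) by [].
apply/funext => N; rewrite /ps_partial (@reindex D N d c
     (fun i => tnth (upd x d t) i - tnth (upd x d T) i)) //.
by rewrite ydd.
Qed.


Lemma upd_id x d : upd x d (tnth x d) = x.
Proof. by apply: eq_from_tnth => i; rewrite tnth_upd; case: eqP => // ->. Qed.

Lemma id_cube (Z : D.-tuple R -> R) (l u : 'I_D -> R) :
  (forall x d, cube x -> forall T, 0 <= T <= 1 -> an1 (fun t => Z (upd x d t)) T) ->
  (forall d, 0 <= l d) -> (forall d, l d < u d) -> (forall d, u d <= 1) ->
  (forall x, cube x -> (forall d, l d < tnth x d < u d) -> Z x = 0) ->
  forall x, cube x -> Z x = 0.
Proof.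
move=> Han l0 lu u1 H0.
suff S : forall k, (k <= D)%N -> forall x, cube x ->
    (forall d : 'I_D, (k <= d)%N -> l d < tnth x d < u d) -> Z x = 0.
  by move=> x cx; apply: (S D) => // d; rewrite leqNgt ltn_ord.
elim=> [|k IH] kD x cx hx.
  by apply: H0 => // d; apply: hx.
pose dk : 'I_D := Ordinal kD.
rewrite -(upd_id x dk).
have := @an1_id (fun t => Z (upd x dk t)) (l dk) (u dk) (Han x dk cx) (l0 dk) (lu dk) (u1 dk).
apply; last by apply: cx.
move=> t ht; apply: (IH (ltnW kD)).
  by apply: cube_upd => //; move: ht (l0 dk) (u1 dk) => /andP[? ?] ? ?; apply/andP; split; lra.
move=> d kd; rewrite tnth_upd; case: eqP => [-> //|dne].
apply: hx; rewrite ltn_neqAle kd andbT; apply/negP => /eqP kdE.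
by apply: dne; apply: val_inj; rewrite /= kdE.
Qed.

Lemma an1_mercer_l (K : nat) (lam : 'I_K -> R) (eta : 'I_K -> D.-tuple R -> R) :
  (forall k, real_analytic_on_cube (eta k)) ->
  forall t x d, cube x -> forall T, 0 <= T <= 1 ->
  an1 (fun tau => mercer lam eta (upd x d tau) t) T.
Proof.
move=> Ha t x d cx T hT; rewrite /mercer.
apply: an1_sum => k.
apply: (@an1_ext (fun tau => (lam k * eta k t) * eta k (upd x d tau))).
  by move=> y _; rewrite mulrAC.
by apply: an1_scale; apply: slice_an.
Qed.

Lemma an1_mercer_r (K : nat) (lam : 'I_K -> R) (eta : 'I_K -> D.-tuple R -> R) :
  (forall k, real_analytic_on_cube (eta k)) ->
  forall s x d, cube x -> forall T, 0 <= T <= 1 ->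
  an1 (fun tau => mercer lam eta s (upd x d tau)) T.
Proof.
move=> Ha s x d cx T hT; rewrite /mercer.
apply: an1_sum => k.
by apply: an1_scale; apply: slice_an.
Qed.

Lemma an1_sub (g1 g2 : R -> R) T : an1 g1 T -> an1 g2 T -> an1 (fun x => g1 x - g2 x) T.
Proof.
move=> h1 h2; apply: (@an1_ext (fun x => g1 x + (-1) * g2 x)).
  by move=> x _; rewrite mulN1r.
by apply: an1_add => //; apply: an1_scale.
Qed.


Lemma G_zero (Z : D.-tuple R -> D.-tuple R -> R) (lA uA lB uB : 'I_D -> R) :
  (forall t, cube t -> forall x d, cube x -> forall T, 0 <= T <= 1 ->
     an1 (fun tau => Z (upd x d tau) t) T) ->
  (forall s, cube s -> forall x d, cube x -> forall T, 0 <= T <= 1 ->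
     an1 (fun tau => Z s (upd x d tau)) T) ->
  (forall d, 0 <= lA d) -> (forall d, lA d < uA d) -> (forall d, uA d <= 1) ->
  (forall d, 0 <= lB d) -> (forall d, lB d < uB d) -> (forall d, uB d <= 1) ->
  (forall s t, cube s -> cube t -> (forall d, lA d < tnth s d < uA d) ->
     (forall d, lB d < tnth t d < uB d) -> Z s t = 0) ->
  forall s t, cube s -> cube t -> Z s t = 0.
Proof.
move=> HL HR lA0 lAu uA1 lB0 lBu uB1 H0.
have S1 : forall t, cube t -> (forall d, lB d < tnth t d < uB d) ->
    forall s, cube s -> Z s t = 0.
  move=> t ct ht; apply: (@id_cube (fun s => Z s t) lA uA) => //.
    by move=> x d cx T hT; exact: HL.
  by move=> x cx hx; apply: H0.
move=> s t cs; apply: (@id_cube (fun t => Z s t) lB uB) => //.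
  by move=> x d cx T hT; exact: HR.
by move=> x cx hx; apply: S1.
Qed.

Lemma term_est (n : nat) (a : 'I_n -> nat) (y : 'I_n -> R) (th p : R) :
  0 <= th -> th <= 1 -> 0 <= p -> (forall i, `|y i| <= th * p) ->
  (exists i, a i != 0%N) ->
  \prod_(i < n) `|y i| ^+ a i <= th * \prod_(i < n) p ^+ a i.
Proof.
move=> th0 th1 p0 hy [i0 ai0].
apply: (@le_trans _ _ (\prod_(i < n) (th * p) ^+ a i)).
  apply: ler_prod => i _; rewrite exprn_ge0 //=.
  by apply: lerXn2r => //; rewrite nnegrE // mulr_ge0.
rewrite (eq_bigr (fun i => th ^+ a i * p ^+ a i)); last by move=> i _; rewrite exprMn.
rewrite big_split /= prodrXr; apply: ler_wpM2r; first by apply: prodr_ge0 => i _; exact: exprn_ge0.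
have -> : th = th ^+ 1 by rewrite expr1.
rewrite -exprM mul1n; apply: ler_wiXn2l => //.
rewrite (bigD1 i0) //=; apply: leq_trans (leq_addr _ _).
by rewrite lt0n.
Qed.


Lemma an_cont (eta : D.-tuple R -> R) : real_analytic_on_cube eta ->
  forall x0, cube x0 -> forall e, 0 < e -> exists2 rho, 0 < rho &
  forall x, cube x -> (forall d, `|tnth x d - tnth x0 d| < rho) -> `|eta x - eta x0| < e.
Proof.
case=> U [f [oU cU aU Ef]] x0 cx0 e e0.
have Ux0 := cU _ cx0.
have [r r0 [c Hc]] := aU x0 Ux0.
have [w w0 Hw] := oU x0 Ux0.
set p := Num.min r w / 2.
have mrw : 0 < Num.min r w by rewrite lt_min r0 w0.
have mr : Num.min r w <= r by rewrite ge_min lexx.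
have mw : Num.min r w <= w by rewrite ge_min lexx orbT.
have p0 : 0 < p by rewrite /p divr_gt0.
have pr : p < r by apply: lt_le_trans mr; rewrite /p ltr_pdivrMr //; lra.
have pw : p < w by apply: lt_le_trans mw; rewrite /p ltr_pdivrMr //; lra.
set z := [tuple tnth x0 i + p | i < D].
have zd : forall i, tnth z i - tnth x0 i = p.
  by move=> i; rewrite tnth_mktuple addrAC subrr add0r.
have Uz : U z by apply: Hw => d; rewrite zd gtr0_norm.
have hz : forall d, `|tnth z d - tnth x0 d| < r by move=> d; rewrite zd gtr0_norm.
have [[M HM] _] := Hc z hz Uz.
have M0 : 0 <= M.
  apply: le_trans (HM 0%N); apply: sumr_ge0 => a _; apply: mulr_ge0 => //.
  by apply: prodr_ge0 => i _; exact: exprn_ge0.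
set c0 := c (fun _ => 0%N).
have est : forall th x, 0 <= th -> th <= 1 -> U x ->
    (forall d, `|tnth x d - tnth x0 d| <= th * p) -> `|f x - c0| <= th * M.
  move=> th x th0 th1 Ux hx.
  have hxr : forall d, `|tnth x d - tnth x0 d| < r.
    move=> d; apply: le_lt_trans (hx d) _; apply: le_lt_trans pr.
    by rewrite ler_piMl // ltW.
  have [_ cv] := Hc x hxr Ux.
  apply: (lim_bound (N0 := 1%N) cv) => N N1.
  pose a0 : {ffun 'I_D -> 'I_N} := [ffun _ => Ordinal N1].
  rewrite /ps_partial (bigD1 a0) //=.
  have -> : c (fun d => nat_of_ord (a0 d)) = c0.
    by rewrite /c0; congr c; apply/funext => i; rewrite ffunE.
  rewrite [X in c0 * X]big1 ?mulr1; last by move=> i _; rewrite ffunE expr0.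
  rewrite addrAC subrr add0r.
  apply: le_trans (ler_norm_sum _ _ _) _.
  apply: (@le_trans _ _ (\sum_(a | a != a0) th * (`|c (fun d => nat_of_ord (a d))| *
        \prod_(i < D) `|tnth z i - tnth x0 i| ^+ a i))).
    apply: ler_sum => a ana0.
    rewrite normrM mulrCA; apply: ler_wpM2l => //.
    rewrite normr_prod (eq_bigr (fun i => `|tnth x i - tnth x0 i| ^+ a i)); last first.
      by move=> i _; rewrite normrX.
    rewrite [X in _ <= _ * X](eq_bigr (fun i => p ^+ a i)); last by move=> i _; rewrite zd gtr0_norm.
    apply: term_est => //; first exact: ltW.
    have [i ai] : exists i, a i != a0 i.
      apply/existsP; rewrite -negb_forall; apply: contra ana0 => /forallP h.
      by apply/eqP/ffunP => i; exact/eqP.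
    exists i; apply: contra ai; rewrite ffunE => /eqP h; apply/eqP/val_inj.
    by rewrite /= h.
  rewrite -mulr_sumr; apply: ler_wpM2l => //; apply: le_trans (HM N).
  rewrite /ps_abs_partial [X in _ <= X](bigD1 a0) //=; apply: ler_wpDl => //.
  by apply: mulr_ge0 => //; apply: prodr_ge0 => i _; exact: exprn_ge0.
have fx0 : f x0 = c0.
  have h : forall d, `|tnth x0 d - tnth x0 d| <= 0 * p.
    by move=> d; rewrite subrr normr0 mul0r.
  have := est 0 x0 (lexx 0) ler01 Ux0 h.
  by rewrite mul0r normr_le0 subr_eq0 => /eqP.
set th := Num.min 1 (e / (M + 1) / 2).
have M1 : 0 < M + 1 by lra.
have q0 : 0 < e / (M + 1) / 2 by rewrite !divr_gt0.
have th0 : 0 < th by rewrite lt_min ltr01 q0.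
have th1 : th <= 1 by rewrite ge_min lexx.
have thq : th <= e / (M + 1) / 2 by rewrite ge_min lexx orbT.
exists (th * p); first by rewrite mulr_gt0.
move=> x cx hx; rewrite -!Ef // fx0.
apply: le_lt_trans (est th x (ltW th0) th1 (cU _ cx) (fun d => ltW (hx d))) _.
apply: (@le_lt_trans _ _ (th * (M + 1))); first by apply: (ler_wpM2l (ltW th0)); lra.
apply: (@le_lt_trans _ _ (e / (M + 1) / 2 * (M + 1))); first exact: (ler_wpM2r (ltW M1)).
rewrite mulrAC divfK; last by rewrite gt_eqF.
by rewrite ltr_pdivrMr //; lra.
Qed.


Local Open Scope ereal_scope.

Lemma int_mono (f g : R -> \bar R) (A : set R) : (forall x, A x -> 0 <= f x) ->
  (forall x, A x -> f x <= g x) ->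
  \int[@lebesgue_measure R]_(x in A) f x <= \int[@lebesgue_measure R]_(x in A) g x.
Proof.
move=> f0 fg.
have g0 : forall x, A x -> 0 <= g x by move=> x Ax; apply: le_trans (f0 x Ax) (fg x Ax).
rewrite !ge0_integralE //; apply: ereal_sup_le => _ [h hf <-]; exists h => //= x.
apply: le_trans (hf x) _; rewrite /patch; case: ifP => // /set_mem Ax.
exact: fg.
Qed.

Lemma nnint_ge0 (n : nat) (f : n.-tuple R -> \bar R) : (forall x, 0 <= f x) ->
  0 <= cube_nnint f.
Proof.
elim: n f => [|n IH] f f0 /=; first exact: f0.
by apply: integral_ge0 => x _; apply: IH.
Qed.

Lemma nnint_ext (n : nat) (f g : n.-tuple R -> \bar R) :
  (forall x, cube x -> f x = g x) -> cube_nnint f = cube_nnint g.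
Proof.
elim: n f g => [|n IH] f g fg /=.
  by apply: fg => -[].
apply: eq_integral => x /set_mem; rewrite /= in_itv /= => /andP[x0 x1].
apply: IH => t ct; apply: fg => i.
rewrite (tnth_nth 0%R); case: i => [[|k] hk] /=; first by rewrite x0.
by move: (ct (Ordinal (ltnSE hk))); rewrite (tnth_nth 0%R).
Qed.

Lemma nnint_box (n : nat) (f : n.-tuple R -> \bar R) (l : 'I_n -> R) (w c : R) :
  (0 < w)%R -> (0 <= c)%R -> (forall d, 0 <= l d)%R -> (forall d, l d + w <= 1)%R ->
  (forall x, 0 <= f x) ->
  (forall x, (forall d, l d <= tnth x d <= l d + w)%R -> c%:E <= f x) ->
  (c * w ^+ n)%:E <= cube_nnint f.
Proof.
elim: n f l => [|n IH] f l w0 c0 l0 l1 f0 hf /=.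
  by rewrite expr0 mulr1; apply: hf => -[].
pose A := `[l ord0, (l ord0 + w)%R]%classic.
apply: (@le_trans _ _ (\int[@lebesgue_measure R]_(x in `[0%R, 1%R]%classic)
          ((c * w ^+ n) * \1_A x)%R%:E)); last first.
  apply: int_mono => x _.
    by rewrite lee_fin mulr_ge0 // ?mulr_ge0 // exprn_ge0 // ltW.
  rewrite indicE; have [/set_mem /= hx|_] := boolP (x \in A); last first.
    by rewrite mulr0; apply: nnint_ge0 => t.
  rewrite mulr1.
  apply: (IH _ (fun d => l (lift ord0 d))) => // t ht.
  apply: hf => i; rewrite (tnth_nth 0%R); case: i => [[|k] hk] /=.
    have -> : Ordinal hk = ord0 by exact: val_inj.
    by move: hx; rewrite /A /= in_itv /=.
  have -> : Ordinal hk = lift ord0 (Ordinal (ltnSE hk)) by exact: val_inj.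
  by move: (ht (Ordinal (ltnSE hk))); rewrite (tnth_nth 0%R) /=.
have E := @integralZl_indic _ _ R (@lebesgue_measure R) _ (measurable_itv `[0%R, 1%R])
  (fun _ => A) (c * w ^+ n)%R.
rewrite /= in E; rewrite E; last 2 first.
  by move=> k0; exfalso; move: k0; rewrite ltNge mulr_ge0 // exprn_ge0 // ltW.
  exact: measurable_itv.
rewrite integral_indic //.
have -> : (A `&` `[0%R, 1%R])%classic = A.
  apply/setIidl => x; rewrite /A /= !in_itv /= => /andP[h1 h2].
  by rewrite (le_trans (l0 ord0) h1) (le_trans h2 (l1 ord0)).
have LA : (@lebesgue_measure R) A = w%:E.
  by rewrite /A lebesgue_measure_itv /= lte_fin ltrDl w0 -EFinD addrAC subrr add0r.
rewrite [X in _ <= _ * X](_ : _ = w%:E); last exact: LA.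
rewrite -EFinM exprSr mulrA.
  exact: lexx.
exact: measurable_itv.
Qed.


Local Close Scope ereal_scope.

Lemma kint_pos (h : D.-tuple R -> D.-tuple R -> R) (ls lt : 'I_D -> R) (w c : R) :
  0 < w -> 0 < c -> (forall d, 0 <= ls d) -> (forall d, ls d + w <= 1) ->
  (forall d, 0 <= lt d) -> (forall d, lt d + w <= 1) ->
  (forall s t, (forall d, ls d <= tnth s d <= ls d + w) ->
     (forall d, lt d <= tnth t d <= lt d + w) -> c <= `|h s t|) ->
  kint (fun s t => (`|h s t|)%:E) <> 0%E.
Proof.
move=> w0 c0 ls0 ls1 lt0 lt1 H.
have cw0 : 0 < c * w ^+ D by rewrite mulr_gt0 // exprn_gt0.
have : (((c * w ^+ D) * w ^+ D)%:E <= kint (fun s t => (`|h s t|)%:E))%E.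
  rewrite /kint; apply: (@nnint_box D _ ls w (c * w ^+ D) w0 (ltW cw0) ls0 ls1).
    by move=> s; apply: nnint_ge0 => t.
  move=> s hs; apply: (@nnint_box D _ lt w c w0 (ltW c0) lt0 lt1) => // t ht.
  by rewrite lee_fin; apply: H.
move=> hle heq; move: hle; rewrite heq lee_fin => hle.
have : 0 < c * w ^+ D * w ^+ D by rewrite mulr_gt0 // exprn_gt0.
by rewrite ltNge hle.
Qed.

Lemma bigmin_pos (F : 'I_D -> R) : (forall d, 0 < F d) ->
  0 < \big[Num.min/1]_(d < D) F d.
Proof.
move=> H; elim/big_ind: _ => //; try exact: ltr01.
by move=> x y x0 y0; rewrite lt_min x0 y0.
Qed.

Lemma bigmin_le (F : 'I_D -> R) d : \big[Num.min/1]_(d < D) F d <= F d.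
Proof. by rewrite (bigD1 d) //= ge_min lexx. Qed.

Definition boxp (s0 t0 : D.-tuple R) (e : R) : set (D.-tuple R * D.-tuple R) :=
  [set p | cube p.1 /\ cube p.2 /\ (forall d, `|tnth p.1 d - tnth s0 d| < e) /\
     (forall d, `|tnth p.2 d - tnth t0 d| < e)].

Definition nearp (s0 t0 : D.-tuple R) := filter_from [set e : R | 0 < e] (boxp s0 t0).

Lemma nearp_filter s0 t0 : Filter (nearp s0 t0).
Proof.
apply: filter_from_filter; first by exists 1; rewrite /= ltr01.
move=> i j /= i0 j0; exists (Num.min i j); first by rewrite /= lt_min i0 j0.
move=> p [c1 [c2 [h1 h2]]]; split.
  split; first by []; split; first by [].
  by split => d; [move: (h1 d) | move: (h2 d)]; rewrite lt_min => /andP[].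
split; first by []; split; first by [].
by split => d; [move: (h1 d) | move: (h2 d)]; rewrite lt_min => /andP[].
Qed.
Existing Instance nearp_filter.


Lemma cvg_fst (eta : D.-tuple R -> R) s0 t0 : real_analytic_on_cube eta -> cube s0 ->
  (fun p : D.-tuple R * D.-tuple R => eta p.1) @ nearp s0 t0 --> eta s0.
Proof.
move=> Ha cs; apply/(@cvgrPdist_lt _ _ _ _ (nearp_filter s0 t0)) => e e0.
have [rho rho0 H] := @an_cont eta Ha _ cs e e0.
exists rho => // p [c1 [c2 [h1 h2]]] /=; rewrite distrC; exact: H.
Qed.

Lemma cvg_snd (eta : D.-tuple R -> R) s0 t0 : real_analytic_on_cube eta -> cube t0 ->
  (fun p : D.-tuple R * D.-tuple R => eta p.2) @ nearp s0 t0 --> eta t0.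
Proof.
move=> Ha cs; apply/(@cvgrPdist_lt _ _ _ _ (nearp_filter s0 t0)) => e e0.
have [rho rho0 H] := @an_cont eta Ha _ cs e e0.
exists rho => // p [c1 [c2 [h1 h2]]] /=; rewrite distrC; exact: H.
Qed.


Lemma cvg_bigsum {T : Type} (F : set_system T) {FF : Filter F} (K : nat)
  (f : 'I_K -> T -> R) (l : 'I_K -> R) :
  (forall k, f k x @[x --> F] --> l k) ->
  (\sum_(k < K) f k x) @[x --> F] --> \sum_(k < K) l k.
Proof.
elim: K f l => [|K IH] f l H.
  rewrite big_ord0; suff -> : (fun x => \sum_(k < 0) f k x) = (fun _ => 0) by exact: cvg_cst.
  by apply/funext => x; rewrite big_ord0.
rewrite big_ord_recr /=.
suff -> : (fun x => \sum_(k < K.+1) f k x) =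
  (fun x => \sum_(k < K) f (widen_ord (leqnSn K) k) x) + (fun x => f ord_max x).
  by apply: cvgD; [apply: IH => k; exact: H | exact: H].
by apply/funext => x; rewrite big_ord_recr.
Qed.

Lemma cvg_mercer (K : nat) (lam : 'I_K -> R) (eta : 'I_K -> D.-tuple R -> R) s0 t0 :
  (forall k, real_analytic_on_cube (eta k)) -> cube s0 -> cube t0 ->
  (fun p : D.-tuple R * D.-tuple R => mercer lam eta p.1 p.2) @ nearp s0 t0 -->
  mercer lam eta s0 t0.
Proof.
move=> Ha cs ct; rewrite /mercer; apply: cvg_bigsum => k.
apply: cvgM; first apply: cvgMr; [exact: cvg_fst | exact: cvg_snd].
Qed.

Lemma cont_pos (G : D.-tuple R -> D.-tuple R -> R) s0 t0 :
  (fun p : D.-tuple R * D.-tuple R => G p.1 p.2) @ nearp s0 t0 --> G s0 t0 ->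
  G s0 t0 != 0 ->
  exists2 rho, 0 < rho & forall s t, boxp s0 t0 rho (s, t) -> `|G s0 t0| / 2 <= `|G s t|.
Proof.
move=> cv G0.
have e0 : 0 < `|G s0 t0| / 2 by rewrite divr_gt0 // normr_gt0.
have [rho rho0 H] := (cvgrPdist_lt _ _).1 cv _ e0.
exists rho => // s t hb; have := H _ hb => /= hlt.
have := ler_normD (G s0 t0 - G s t) (G s t); rewrite subrK => hn.
have : `|G s0 t0| / 2 + `|G s0 t0| / 2 = `|G s0 t0| by rewrite -splitr.
lra.
Qed.
Arguments cont_pos [G s0 t0].


Lemma in_cube (l u : 'I_D -> R) (x : D.-tuple R) : (forall d, 0 <= l d) -> (forall d, u d <= 1) ->
  (forall d, l d < tnth x d < u d) -> cube x.
Proof.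
move=> l0 u1 hx d; have := hx d; have := l0 d; have := u1 d => h1 h2 /andP[h3 h4].
by apply/andP; split; lra.
Qed.
Arguments in_cube [l u x].

Lemma zero_open (h G : D.-tuple R -> D.-tuple R -> R) (lA uA lB uB : 'I_D -> R) :
  kint (fun s t => (`|h s t|)%:E) = 0%E ->
  (forall d, 0 <= lA d) -> (forall d, uA d <= 1) ->
  (forall d, 0 <= lB d) -> (forall d, uB d <= 1) ->
  (forall s t, (forall d, lA d < tnth s d < uA d) -> (forall d, lB d < tnth t d < uB d) ->
     h s t = G s t) ->
  (forall s0 t0, cube s0 -> cube t0 ->
     (fun p : D.-tuple R * D.-tuple R => G p.1 p.2) @ nearp s0 t0 --> G s0 t0) ->
  forall s t, (forall d, lA d < tnth s d < uA d) -> (forall d, lB d < tnth t d < uB d) ->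
  G s t = 0.
Proof.
move=> hk lA0 uA1 lB0 uB1 hG cG s0 t0 hs ht.
have cs := in_cube lA0 uA1 hs.
have ct := in_cube lB0 uB1 ht.
case: (eqVneq (G s0 t0) 0) => // G0.
have [rho rho0 Hr] := cont_pos (cG _ _ cs ct) G0.
set ms := \big[Num.min/1]_(d < D) Num.min (tnth s0 d - lA d) (uA d - tnth s0 d).
set mt := \big[Num.min/1]_(d < D) Num.min (tnth t0 d - lB d) (uB d - tnth t0 d).
have ms0 : 0 < ms.
  apply: bigmin_pos => d; have /andP[h1 h2] := hs d.
  by rewrite lt_min !subr_gt0 h1 h2.
have mt0 : 0 < mt.
  apply: bigmin_pos => d; have /andP[h1 h2] := ht d.
  by rewrite lt_min !subr_gt0 h1 h2.
set m := Num.min (Num.min rho ms) mt.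
have m0 : 0 < m by rewrite !lt_min rho0 ms0 mt0.
have mr : m <= rho by rewrite /m !ge_min lexx.
have mms : m <= ms by rewrite /m !ge_min lexx orbT.
have mmt : m <= mt by rewrite /m ge_min lexx orbT.
set w := m / 2.
have w0 : 0 < w by rewrite divr_gt0.
have wm : w < m by rewrite /w ltr_pdivrMr //; lra.
have hsd : forall d, w < tnth s0 d - lA d /\ w < uA d - tnth s0 d.
  move=> d; have := bigmin_le (fun d => Num.min (tnth s0 d - lA d) (uA d - tnth s0 d)) d.
  rewrite -/ms => h1; have h2 : w < Num.min (tnth s0 d - lA d) (uA d - tnth s0 d) by lra.
  by move: h2; rewrite lt_min => /andP[].
have htd : forall d, w < tnth t0 d - lB d /\ w < uB d - tnth t0 d.
  move=> d; have := bigmin_le (fun d => Num.min (tnth t0 d - lB d) (uB d - tnth t0 d)) d.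
  rewrite -/mt => h1; have h2 : w < Num.min (tnth t0 d - lB d) (uB d - tnth t0 d) by lra.
  by move: h2; rewrite lt_min => /andP[].
have ww : 0 < w + w by lra.
have c0 : 0 < `|G s0 t0| / 2 by rewrite divr_gt0 // normr_gt0.
exfalso; apply: (@kint_pos h (fun d => tnth s0 d - w) (fun d => tnth t0 d - w) (w + w) _ ww c0 _ _ _ _ _ hk).
- by move=> d; have [h1 h2] := hsd d; have := lA0 d; lra.
- by move=> d; have [h1 h2] := hsd d; have := uA1 d; lra.
- by move=> d; have [h1 h2] := htd d; have := lB0 d; lra.
- by move=> d; have [h1 h2] := htd d; have := uB1 d; lra.
move=> s t bs bt.
have hs' : forall d, lA d < tnth s d < uA d.
  by move=> d; have [h1 h2] := hsd d; have /andP[h3 h4] := bs d; apply/andP; split; lra.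
have ht' : forall d, lB d < tnth t d < uB d.
  by move=> d; have [h1 h2] := htd d; have /andP[h3 h4] := bt d; apply/andP; split; lra.
rewrite hG //; apply: Hr; split; first exact: in_cube lA0 uA1 hs'.
split; first exact: in_cube lB0 uB1 ht'.
split => d /=.
  have /andP[h3 h4] := bs d; rewrite ltr_norml; apply/andP; split; lra.
have /andP[h3 h4] := bt d; rewrite ltr_norml; apply/andP; split; lra.
Qed.


Local Open Scope ereal_scope.
Lemma nnint0 (n : nat) : cube_nnint (fun _ : n.-tuple R => 0) = 0.
Proof.
elim: n => [|n IH] //=.
by under eq_integral do rewrite IH; rewrite integral0.
Qed.
Local Close Scope ereal_scope.

Lemma kint_ext (f g : D.-tuple R -> D.-tuple R -> \bar R) :
  (forall s t, cube s -> cube t -> f s t = g s t) -> kint f = kint g.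
Proof.
move=> fg; rewrite /kint; apply: nnint_ext => s cs; apply: nnint_ext => t ct.
exact: fg.
Qed.

Lemma kint0 : kint (fun _ _ : D.-tuple R => 0%E) = 0%E.
Proof. by rewrite /kint; under [X in cube_nnint X]funext do rewrite nnint0; rewrite nnint0. Qed.

End Aux.

Existing Instance nearp_filter.
Local Open Scope ring_scope.

Theorem theorem1 (R : realType) (D : nat) (hD : (1 <= D)%N)
  (K1 K2 : nat) (lam1 : 'I_K1 -> R) (eta1 : 'I_K1 -> D.-tuple R -> R)
  (lam2 : 'I_K2 -> R) (eta2 : 'I_K2 -> D.-tuple R -> R)
  (b1 b2 : kern R D) (delta1 delta2 : 'I_D -> R) :
  analytic_finite_rank lam1 eta1 ->
  analytic_finite_rank lam2 eta2 ->
  covariance_kernel b1 -> trace_class b1 ->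
  covariance_kernel b2 -> trace_class b2 ->
  (forall d, 0 < delta1 d < 1) -> (forall d, 0 < delta2 d < 1) ->
  banded delta1 b1 -> banded delta2 b2 ->
  (op_eq (fun s t => mercer lam1 eta1 s t + b1 s t)
         (fun s t => mercer lam2 eta2 s t + b2 s t)
   <-> op_eq (mercer lam1 eta1) (mercer lam2 eta2) /\ op_eq b1 b2).
Proof.
move=> [_ _ _ A1] [_ _ _ A2] _ _ _ _ hd1 hd2 bd1 bd2.
pose G := fun s t => mercer lam1 eta1 s t - mercer lam2 eta2 s t.
have cG : forall s0 t0, cube s0 -> cube t0 ->
    ((fun p : D.-tuple R * D.-tuple R => G p.1 p.2) @ nearp s0 t0 --> G s0 t0)%classic.
  move=> s0 t0 cs ct; rewrite /G.
  apply: (@cvgB _ _ _ _ _ (fun p => mercer lam1 eta1 p.1 p.2) (fun p => mercer lam2 eta2 p.1 p.2)).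
    exact: (@cvg_mercer _ _ K1 lam1 eta1 s0 t0 A1 cs ct).
  exact: (@cvg_mercer _ _ K2 lam2 eta2 s0 t0 A2 cs ct).
have HL : forall t, cube t -> forall x d, cube x -> forall T, 0 <= T <= 1 ->
    an1 (fun tau => G (upd x d tau) t) T.
  by move=> t ct x d cx T hT; apply: an1_sub; apply: an1_mercer_l.
have HR : forall s, cube s -> forall x d, cube x -> forall T, 0 <= T <= 1 ->
    an1 (fun tau => G s (upd x d tau)) T.
  by move=> s cs x d cx T hT; apply: an1_sub; apply: an1_mercer_r.
have Gall : forall lA uA lB uB : 'I_D -> R,
   (forall d, 0 <= lA d) -> (forall d, lA d < uA d) -> (forall d, uA d <= 1) ->
   (forall d, 0 <= lB d) -> (forall d, lB d < uB d) -> (forall d, uB d <= 1) ->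
   (forall h : D.-tuple R -> D.-tuple R -> R, kint (fun s t => (`|h s t|)%:E) = 0%E ->
     (forall s t, (forall d, lA d < tnth s d < uA d) -> (forall d, lB d < tnth t d < uB d) ->
       h s t = G s t) ->
     forall s t, cube s -> cube t -> G s t = 0).
  move=> lA uA lB uB lA0 lAu uA1 lB0 lBu uB1 h hk hG.
  apply: (@G_zero _ _ G lA uA lB uB HL HR lA0 lAu uA1 lB0 lBu uB1) => s t _ _ hs ht.
  exact: (@zero_open _ _ h G lA uA lB uB hk lA0 uA1 lB0 uB1 hG cG).
pose d0 : 'I_D := Ordinal hD.
split.
  move=> H.
  set a := (1 - Num.max (delta1 d0) (delta2 d0)) / 2.
  have h1 := hd1 d0; have h2 := hd2 d0.
  have mx1 : delta1 d0 <= Num.max (delta1 d0) (delta2 d0) by rewrite le_max lexx.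
  have mx2 : delta2 d0 <= Num.max (delta1 d0) (delta2 d0) by rewrite le_max lexx orbT.
  have mxl : Num.max (delta1 d0) (delta2 d0) < 1.
    by rewrite gt_max; move: h1 h2 => /andP[_ ->] /andP[_ ->].
  have a0 : 0 < a by rewrite /a divr_gt0 // subr_gt0.
  have a1 : a + a = 1 - Num.max (delta1 d0) (delta2 d0) by rewrite /a -splitr.
  have Gz : forall s t, cube s -> cube t -> G s t = 0.
    apply: (Gall (fun _ => 0) (fun d => if d == d0 then a else 1)
                 (fun d => if d == d0 then 1 - a else 0) (fun _ => 1) _ _ _ _ _ _
                 (fun s t => mercer lam1 eta1 s t + b1 s t - (mercer lam2 eta2 s t + b2 s t)) H) => //.
    - by move=> d; case: (d == d0) => //; lra.
    - by move=> d; case: (d == d0) => //; lra.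
    - by move=> d; case: (d == d0) => //; lra.
    - by move=> d; case: (d == d0) => //; lra.
    move=> s t hs ht.
    have cs : cube s.
      apply: (@in_cube _ _ (fun _ => 0) (fun d => if d == d0 then a else 1) s) => [d //|d|//].
      by case: (d == d0) => //; lra.
    have ct : cube t.
      apply: (@in_cube _ _ (fun d => if d == d0 then 1 - a else 0) (fun _ => 1) t) => [d|d //|//].
      by case: (d == d0) => //; lra.
    have := hs d0; have := ht d0; rewrite eqxx => /andP[t1 t2] /andP[s1 s2].
    have dist : Num.max (delta1 d0) (delta2 d0) <= `|tnth s d0 - tnth t d0|.
      by rewrite distrC ger0_norm; lra.
    rewrite (bd1 s t cs ct); last by exists d0; apply: le_trans dist.
    rewrite (bd2 s t cs ct); last by exists d0; apply: le_trans dist.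
    by rewrite /G !addr0.
  split.
    rewrite /op_eq -(@kint0 _ D); apply: kint_ext => s t cs ct.
    by have := Gz s t cs ct; rewrite /G => ->; rewrite normr0.
  rewrite /op_eq -H; apply: kint_ext => s t cs ct; congr (_%:E).
  have := Gz s t cs ct; rewrite /G => /eqP; rewrite subr_eq0 => /eqP ->.
  by congr `|_|; ring.
move=> [Hm Hb].
have Gz : forall s t, cube s -> cube t -> G s t = 0.
  apply: (Gall (fun _ => 0) (fun _ => 1) (fun _ => 0) (fun _ => 1) _ _ _ _ _ _ G Hm) => //; exact: ltr01.
rewrite /op_eq -Hb; apply: kint_ext => s t cs ct; congr (_%:E).
have := Gz s t cs ct; rewrite /G => /eqP; rewrite subr_eq0 => /eqP ->.
by congr `|_|; ring.
Qed.
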